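(* Let $\mathcal{P}$ be a Class II source set, i.e. there is a permutation $T$ of $\{1,\ldots,M\}$ such that every $P\in\mathcal{P}$ satisfies $P_{T(1)} \ge P_{T(2)} \ge \dots \ge P_{T(M)}$. Then for every $0< D\le 1$ there exists an optimal mechanism, i.e. a mechanism $Q_{\hat X|X}$ attaining $\epsilon^*_{\mathrm{DP}}(\mathcal{P},D)=\min_{Q\in\mathcal{Q}(\mathcal{P},D)}\epsilon_{\mathrm{DP}}(Q)$, whose distortions $D_i=1-Q(i|i)$ satisfy $D_{T(1)} \le D_{T(2)} \le \dots \le D_{T(M)}$.
   Context: Data $X$ takes values in the finite alphabet $\mathcal{X}=\hat{\mathcal{X}}=\{1,\ldots,M\}$ and is drawn from an unknown distribution $P$ belonging to a known set $\mathcal{P}$ of distributions on $\{1,\ldots,M\}$ (a source set); $P_i$ denotes $P(X=i)$. A mechanism is a conditional distribution (row-stochastic $M\times M$ matrix) $Q_{\hat X|X}=Q(j|i)$ mapping input $X$ to output $\hat X$. Distortion is Hamming distortion $d(x,y)=\mathbb{1}[x\neq y]$, so the average distortion under $P$ is $\sum_{i=1}^M P_i D_i$ with $D_i = 1-Q(i|i)$. A mechanism is $(\mathcal{P},D)$-valid if $\sum_{i=1}^M P_i D_i\le D$ for all $P\in\mathcal{P}$; $\mathcal{Q}(\mathcal{P},D)$ is the set of such mechanisms. The differential privacy leakage is $\epsilon_{\mathrm{DP}}(Q)=\min\{\epsilon: Q(\hat x|x_1)\le e^{\epsilon}Q(\hat x|x_2)\ \forall x_1,x_2,\hat x\}$.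 A source set is Class I if its convex hull contains the uniform distribution; it is Class II if it is not Class I and there exists a single permutation $T$ with $P_{T(1)}\ge \dots\ge P_{T(M)}$ for every $P\in\mathcal{P}$. *)

(* Defs.v *)
From HB Require Import structures.
From mathcomp Require Import all_boot all_order all_algebra all_fingroup.
From mathcomp Require Import all_classical all_reals all_analysis.
Set Implicit Arguments. Unset Strict Implicit. Unset Printing Implicit Defensive.
Import Order.TTheory GRing.Theory Num.Theory.
Local Open Scope ring_scope.
Local Open Scope classical_set_scope.

Definition is_distr (R : realType) (M : nat) (P : 'I_M -> R) : Prop :=
  (forall i, 0 <= P i) /\ \sum_(i < M) P i = 1.

(* A mechanism Q i j = Q(j | i): a row-stochastic M x M matrix. *)
Definition is_mechanism (R : realType) (M : nat) (Q : 'I_M -> 'I_M -> R) : Prop :=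
  forall i, is_distr (Q i).

Definition distortion (R : realType) (M : nat) (Q : 'I_M -> 'I_M -> R) (i : 'I_M) : R :=
  1 - Q i i.

Definition valid_mech (R : realType) (M : nat) (Ps : set ('I_M -> R)) (D : R)
  (Q : 'I_M -> 'I_M -> R) : Prop :=
  is_mechanism Q /\
  forall P, Ps P -> \sum_(i < M) P i * distortion Q i <= D.

Definition dp_bound (R : realType) (M : nat) (Q : 'I_M -> 'I_M -> R) (eps : R) : Prop :=
  forall x1 x2 xh : 'I_M, Q x1 xh <= expR eps * Q x2 xh.

(* DP leakage eps_DP(Q) = min {eps | dp_bound Q eps}, as an extended real
   (+oo when no finite eps works). *)
Definition eps_DP (R : realType) (M : nat) (Q : 'I_M -> 'I_M -> R) : \bar R :=
  ereal_inf [set e%:E | e in [set e : R | dp_bound Q e]].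

Definition optimal_mech (R : realType) (M : nat) (Ps : set ('I_M -> R)) (D : R)
  (Q : 'I_M -> 'I_M -> R) : Prop :=
  valid_mech Ps D Q /\
  forall Q', valid_mech Ps D Q' -> (eps_DP Q <= eps_DP Q')%E.

Definition classII_perm (R : realType) (M : nat) (Ps : set ('I_M -> R)) (T : {perm 'I_M}) : Prop :=
  forall P, Ps P -> forall a b : 'I_M, (a <= b)%N -> P (T b) <= P (T a).

Definition classI (R : realType) (M : nat) (Ps : set ('I_M -> R)) : Prop :=
  exists (n : nat) (w : 'I_n -> R) (Pf : 'I_n -> ('I_M -> R)),
    (forall k, 0 <= w k) /\ \sum_(k < n) w k = 1 /\ (forall k, Ps (Pf k)) /\
    forall i, \sum_(k < n) w k * Pf k i = (M%:R)^-1.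

Definition classII (R : realType) (M : nat) (Ps : set ('I_M -> R)) (T : {perm 'I_M}) : Prop :=
  ~ classI Ps /\ classII_perm Ps T.

(* Main.v *)
Require Import Defs.
From HB Require Import structures.
From mathcomp Require Import all_boot all_order all_algebra all_fingroup.
From mathcomp Require Import all_classical all_reals all_analysis.
From mathcomp Require Import ring lra.
Import Order.TTheory GRing.Theory Num.Theory.
Local Open Scope ring_scope.
Local Open Scope classical_set_scope.
Import numFieldNormedType.Exports.
Lemma sum_tperm (R : realType) (M : nat) (f g : 'I_M -> R) (u v : 'I_M) : u != v ->
  \sum_i f i * g (tperm u v i) = \sum_i f i * g i + (f u - f v) * (g v - g u).
Proof.
move=> uv.
have vu : v != u by rewrite eq_sym.
rewrite (bigD1 u) //= (bigD1 v) //= [X in _ = X + _](bigD1 u) //= [X in _ = _ + X + _](bigD1 v) //=.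
rewrite tpermL tpermR.
rewrite [X in _ = _ + (_ + X) + _](eq_bigr (fun i => f i * g (tperm u v i))); last first.
  by move=> i /andP[iv iu]; rewrite tpermD // eq_sym.
ring.
Qed.

Lemma sort_lemma (R : realType) (M : nat) (Ps : set ('I_M -> R)) (T : {perm 'I_M})
  (D E : R) (Q : 'I_M -> 'I_M -> R) :
  classII_perm Ps T -> valid_mech Ps D Q -> (forall a b c, Q a b <= E * Q c b) ->
  exists Q', [/\ valid_mech Ps D Q', (forall a b c, Q' a b <= E * Q' c b) &
    forall a b : 'I_M, (a <= b)%N -> distortion Q' (T a) <= distortion Q' (T b)].
Proof.
move=> HII [mQ vQ] dQ.
pose d := distortion Q.
pose good (p : {perm 'I_M}) := `[< forall P, Ps P ->
   \sum_i P i * d (p i) <= \sum_i P i * d i >].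
pose Psi (p : {perm 'I_M}) := \sum_(a < M) (a : nat)%:R * d (p (T a)).
have good1 : good 1%g by apply/asboolP => P _; under eq_bigr do rewrite perm1.
have [p gp pmax] : exists2 p, good p & forall q, good q -> Psi q <= Psi p.
  case: (arg_maxP Psi good1) => p gp pmax.
  exists p => // q gq; exact: pmax.
have srt : forall a b : 'I_M, (a <= b)%N -> d (p (T a)) <= d (p (T b)).
  move=> a b ab; rewrite leNgt; apply/negP => lt.
  have ab' : a != b by apply: contraTneq lt => ->; rewrite ltxx.
  have Tab : T a != T b by rewrite (inj_eq perm_inj).
  pose q := (tperm (T a) (T b) * p)%g.
  have qE i : q i = p (tperm (T a) (T b) i) by rewrite permM.
  have gq : good q.
    apply/asboolP => P PP; move/asboolP: gp => /(_ P PP) gp.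
    apply: le_trans gp.
    under eq_bigr do rewrite qE.
    rewrite (@sum_tperm _ _ P (fun i => d (p i)) _ _ Tab) gerDl.
    apply: mulr_ge0_le0; first by rewrite subr_ge0; exact: HII.
    by rewrite subr_le0 ltW.
  have := pmax q gq; rewrite leNgt => /negP; apply.
  rewrite /Psi.
  under [X in _ < X]eq_bigr do rewrite qE.
  have Hab : (a < b)%N by rewrite ltn_neqAle ab' ab.
  have ba : b != a by rewrite eq_sym.
  rewrite [X in X < _](bigD1 a) //= [X in _ + X < _](bigD1 b) //=.
  rewrite [X in _ < X](bigD1 a) //= [X in _ < _ + X](bigD1 b) //=.
  rewrite tpermL tpermR.
  rewrite [X in _ < _ + (_ + X)](eq_bigr (fun i : 'I_M => (i : nat)%:R * d (p (T i)))); last first.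
    move=> i /andP[ib ia]; rewrite tpermD //.
      by rewrite (inj_eq perm_inj) eq_sym.
    by rewrite (inj_eq perm_inj) eq_sym.
  rewrite !addrA ltrD2r.
  have : (a : nat)%:R < (b : nat)%:R :> R by rewrite ltr_nat.
  move: lt; set x := d (p (T a)); set y := d (p (T b)); set A := (a : nat)%:R; set B := (b : nat)%:R.
  move=> lt ltAB.
  have : 0 < (B - A) * (x - y) by apply: mulr_gt0; rewrite subr_gt0.
  lra.
exists (fun i j => Q (p i) (p j)); split.
- split.
  + move=> i; have [h1 h2] := mQ (p i); split => // .
    by rewrite -h2 [RHS](reindex_inj (@perm_inj _ p)).
  + move=> P PP; move/asboolP: gp => /(_ P PP) gp.
    apply: le_trans gp _; exact: vQ.
- by move=> a b c; exact: dQ.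
- by move=> a b ab; exact: srt.
Qed.

Lemma cont_sum (R : realType) (T : topologicalType) (I : Type) (r : seq I)
  (F : I -> T -> R) : (forall i, continuous (F i)) ->
  continuous (fun x => \sum_(i <- r) F i x).
Proof.
move=> HF; elim: r => [|i r IH].
  under eq_fun do rewrite big_nil; exact: cst_continuous.
under eq_fun do rewrite big_cons.
by move=> x; apply: continuousD; [exact: HF| exact: IH].
Qed.

Lemma cont_cmul (R : realType) (T : topologicalType) (c : R) (f : T -> R) :
  continuous f -> continuous (fun x => c * f x).
Proof. by move=> hf x; apply: continuousM; [exact: cst_continuous | exact: hf]. Qed.

Lemma cont_mul (R : realType) (T : topologicalType) (f g : T -> R) :
  continuous f -> continuous g -> continuous (fun x => f x * g x).
Proof. by move=> hf hg x; apply: continuousM; [exact: hf | exact: hg]. Qed.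

Lemma cont_sub (R : realType) (T : topologicalType) (f g : T -> R) :
  continuous f -> continuous g -> continuous (fun x => f x - g x).
Proof. by move=> hf hg x; apply: continuousB; [exact: hf | exact: hg]. Qed.

Lemma cont_coord (R : realType) n (k : 'I_n) : continuous (fun v : 'rV[R]_n => v ord0 k).
Proof. exact: coord_continuous. Qed.

Lemma closed_forall_le (R : realType) (T : topologicalType) (I : Type)
  (f g : I -> T -> R) :
  (forall k, continuous (f k)) -> (forall k, continuous (g k)) ->
  closed [set v | forall k, f k v <= g k v].
Proof.
move=> hf hg.
have -> : [set v | forall k, f k v <= g k v] =
   \bigcap_(k in setT) ((fun v => g k v - f k v) @^-1` [set x : R | 0 <= x]).
  apply/seteqP; split => v /=.
    by move=> H k _; rewrite /= subr_ge0.
  by move=> H k; have := H k Logic.I; rewrite /= subr_ge0.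
apply: closed_bigI => k _; apply: preimage_closed; last exact: closed_ge.
by move=> x _; apply: cont_sub.
Qed.

Lemma entry_le1 (R : realType) M (q : 'I_M -> R) j : is_distr q -> q j <= 1.
Proof.
move=> [h0 h1]; rewrite -h1 (bigD1 j) //= lerDl.
by apply: sumr_ge0 => i _.
Qed.

Lemma exist_min (R : realType) (M : nat) (Ps : set ('I_M -> R)) (D : R) :
  (0 < M)%N ->
  (exists Q E, valid_mech Ps D Q /\ forall a b c, Q a b <= E * Q c b) ->
  exists Q E, [/\ valid_mech Ps D Q, 0 < E, (forall a b c, Q a b <= E * Q c b) &
     forall Q' e, valid_mech Ps D Q' -> dp_bound Q' e -> E <= expR e].
Proof.
move=> M0 [Q1 [E1 [vQ1 dQ1]]].
pose Es := [set E : R | exists Q, valid_mech Ps D Q /\ forall a b c, Q a b <= E * Q c b].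
have lb1 : lbound Es 1.
  move=> E [Q [[mQ _] dQ]].
  pose i := Ordinal M0.
  have [h0 h1] := mQ i.
  have [j hj] : exists j, 0 < Q i j.
    apply: contrapT => H.
    have : \sum_j Q i j <= 0.
      apply: sumr_le0 => j _; rewrite leNgt; apply/negP => hj; apply: H; exists j.
      exact: hj.
    by rewrite h1 ler10.
  have := dQ i j i; nra.
have nEs : Es !=set0 by exists E1, Q1.
have hEs : has_lbound Es by exists 1.
pose Es0 := inf Es.
have Es01 : 1 <= Es0 := lb_le_inf nEs lb1.
have Esle : forall E, Es E -> Es0 <= E := ge_inf hEs.
pose n := #|{: 'I_M * 'I_M}|.
pose Qof (v : 'rV[R]_n) i j := v ord0 (enum_rank (i, j)).
pose K (dl : R) := [set v : 'rV[R]_n | valid_mech Ps D (Qof v) /\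
   forall a b c, Qof v a b <= (Es0 + dl) * Qof v c b].
pose S1 := [set v : 'rV[R]_n | forall k : 'I_M * 'I_M, 0 <= Qof v k.1 k.2].
pose S2 := [set v : 'rV[R]_n | forall i, \sum_j Qof v i j <= 1].
pose S3 := [set v : 'rV[R]_n | forall i, 1 <= \sum_j Qof v i j].
pose S4 := [set v : 'rV[R]_n | forall P : {P | Ps P},
   \sum_i sval P i * distortion (Qof v) i <= D].
pose S5 dl := [set v : 'rV[R]_n | forall k : 'I_M * 'I_M * 'I_M,
   Qof v k.1.1 k.1.2 <= (Es0 + dl) * Qof v k.2 k.1.2].
have cQ : forall i j, continuous (fun v : 'rV[R]_n => Qof v i j).
  by move=> i j; exact: cont_coord.
have Kclosed : forall dl, closed (K dl).
  move=> dl.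
  have -> : K dl = S1 `&` S2 `&` S3 `&` S4 `&` S5 dl.
    apply/seteqP; split => v.
    - move=> [[mQ vQ] dQ]; split; [split; [split; [split|]|]|].
      + by move=> [i j]; exact: (mQ i).1 j.
      + by move=> i; rewrite (mQ i).2.
      + by move=> i; rewrite (mQ i).2.
      + by move=> [P PP]; exact: vQ PP.
      + by move=> [[a b] c]; exact: dQ.
    - move=> [[[[h1 h2] h3] h4] h5]; split; [split|].
      + move=> i; split; first by move=> j; exact: (h1 (i, j)).
        by apply/eqP; rewrite eq_le h2 h3.
      + by move=> P PP; exact: (h4 (exist _ P PP)).
      + by move=> a b c; exact: (h5 (a, b, c)).
  have cI : forall A B : set 'rV[R]_n, closed A -> closed B -> closed (A `&` B).
    by move=> A B; exact: closedI.
  apply: (cI); first apply: (cI); first apply: (cI); first apply: (cI).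
  - apply: closed_forall_le => k; [exact: cst_continuous | exact: cQ].
  - apply: closed_forall_le => k; [exact: cont_sum | exact: cst_continuous].
  - apply: closed_forall_le => k; [exact: cst_continuous | exact: cont_sum].
  - apply: closed_forall_le => k; last exact: cst_continuous.
    apply: cont_sum => i; apply: cont_cmul; apply: cont_sub => //.
    exact: cst_continuous.
  - apply: closed_forall_le => k; [exact: cQ | exact: cont_cmul].
have KC : forall dl, K dl `<=` [set v : 'rV[R]_n | forall k, `[0, 1]%classic (v ord0 k)].
  move=> dl v [[mQ _] _] k.
  have -> : v ord0 k = Qof v (enum_val k).1 (enum_val k).2.
    by rewrite /Qof -surjective_pairing enum_valK.
  rewrite /= in_itv /=; apply/andP; split; first exact: (mQ _).1.
  exact: entry_le1.
have Kmono : forall d1 d2, d1 <= d2 -> K d1 `<=` K d2.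
  move=> d1 d2 d12 v [vv dv]; split => // a b c.
  apply: le_trans (dv a b c) _; apply: ler_wpM2r; first exact: ((vv.1 c).1 b).
  by rewrite lerD2l.
have Kne : forall dl, 0 < dl -> K dl !=set0.
  move=> dl dl0.
  have [E [Q [vQ dQ]] hE] := inf_adherent dl0 (conj nEs hEs).
  exists (\row_k Q (enum_val k).1 (enum_val k).2).
  have QE : Qof (\row_k Q (enum_val k).1 (enum_val k).2) = Q.
    by apply/funext => i; apply/funext => j; rewrite /Qof mxE enum_rankK.
  rewrite /K /= QE; split => // a b c.
  apply: le_trans (dQ a b c) _; apply: ler_wpM2r; first exact: ((vQ.1 c).1 b).
  exact: ltW.
pose F := [set A : set 'rV[R]_n | exists2 dl, 0 < dl & K dl `<=` A].
have PF : ProperFilter F.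
  apply: Build_ProperFilter_ex.
    move=> A [dl dl0 KA]; have [v Kv] := Kne dl dl0; exists v; exact: KA.
  split.
  - by exists 1 => //.
  - move=> A B [d1 d10 KA] [d2 d20 KB]; exists (Num.min d1 d2).
      by rewrite lt_min d10 d20.
    move=> v Kv; split.
      by apply: KA; apply: (Kmono _ _ _ v Kv); rewrite ge_min lexx.
    by apply: KB; apply: (Kmono _ _ _ v Kv); rewrite ge_min lexx orbT.
  - by move=> A B AB [dl dl0 KA]; exists dl => // v /KA /AB.
have Ccomp : compact [set v : 'rV[R]_n | forall k, `[0, 1]%classic (v ord0 k)].
  exact: (@rV_compact R n (fun=> `[0, 1]%classic) (fun _ => @segment_compact R 0 1)).
have FC : F [set v : 'rV[R]_n | forall k, `[0, 1]%classic (v ord0 k)].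
  by exists 1 => //; exact: KC.
have [v [Cv clv]] := Ccomp F PF FC.
have Kv : forall dl, 0 < dl -> K dl v.
  move=> dl dl0; apply: Kclosed => B nB.
  by apply: clv nB; exists dl.
exists (Qof v), Es0; split.
- by have [] := Kv 1 ltr01.
- by apply: lt_le_trans Es01.
- move=> a b c; apply/ler_addgt0Pr => e e0.
  have [[mQ _] dQ] := Kv e e0.
  have := dQ a b c.
  have h0 := (mQ c).1 b.
  have h1 := @entry_le1 _ _ _ b (mQ c).
  nra.
- move=> Q' e vQ' dQ'; apply: Esle; exists Q'; split => //.
Qed.

Lemma optimal_of (R : realType) (M : nat) (Ps : set ('I_M -> R)) (D : R)
  (Q : 'I_M -> 'I_M -> R) (E : R) :
  valid_mech Ps D Q -> 0 < E -> (forall a b c, Q a b <= E * Q c b) ->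
  (forall Q' e, valid_mech Ps D Q' -> dp_bound Q' e -> E <= expR e) ->
  optimal_mech Ps D Q.
Proof.
move=> vQ E0 dQ H; split => // Q' vQ'.
apply: (@le_trans _ _ (ln E)%:E).
  apply: ereal_inf_lbound; exists (ln E) => //.
  by move=> a b c; rewrite lnK ?posrE.
apply: le_ereal_inf_tmp => _ [e de <-].
rewrite lee_fin -(expRK e) ler_ln ?posrE ?expR_gt0 //.
exact: H de.
Qed.

Theorem lemma2 (R : realType) (M : nat) (Ps : set ('I_M -> R)) (T : {perm 'I_M})
  (HPs : forall P, Ps P -> is_distr P)
  (HII : classII Ps T) (D : R) (hD0 : 0 < D) (hD1 : D <= 1) :
  exists Q : 'I_M -> 'I_M -> R,
    optimal_mech Ps D Q /\
    forall a b : 'I_M, (a <= b)%N -> distortion Q (T a) <= distortion Q (T b).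
Proof.
case: HII => _ HT.
case: (posnP M) => [M0 | M0].
  subst M.
  exists (fun _ _ => 0); split; last by move=> [].
  split.
    split; first by move=> [].
    by move=> P _; rewrite big_ord0 ltW.
  move=> Q' _.
  have E : forall Q : 'I_0 -> 'I_0 -> R, [set e : R | dp_bound Q e] = setT.
    by move=> Q; apply/seteqP; split => e //= _ [].
  by rewrite /eps_DP !E.
case: (pselect (exists Q E, valid_mech Ps D Q /\ forall a b c, Q a b <= E * Q c b)) => [H|H].
  have [Q [E [vQ E0 dQ Hmin]]] := @exist_min _ _ _ _ M0 H.
  have [Q' [vQ' dQ' mon]] := @sort_lemma _ _ _ _ _ _ _ HT vQ dQ.
  by exists Q'; split => //; exact: (@optimal_of _ _ _ _ _ _ vQ' E0 dQ' Hmin).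
pose Q := fun i j : 'I_M => if i == j then 1 else 0 : R.
have dQ0 : forall i, distortion Q i = 0 by move=> i; rewrite /distortion /Q eqxx subrr.
exists Q; split; last by move=> a b _; rewrite !dQ0.
have vQ : valid_mech Ps D Q.
  split.
    move=> i; split; first by move=> j; rewrite /Q; case: (i == j).
    rewrite (bigD1 i) //= /Q eqxx big1 ?addr0 //.
    by move=> j ji; rewrite eq_sym (negbTE ji).
  by move=> P _; rewrite big1 ?ltW // => i _; rewrite dQ0 mulr0.
split => // Q' vQ'.
apply: (le_trans (leey _)).
apply: le_ereal_inf_tmp => _ [e de <-]; exfalso; apply: H.
by exists Q', (expR e); split => // a b c; exact: de.
Qed.
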